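(* Let $\mathcal{I}_1\sqcup\cdots\sqcup\mathcal{I}_K=[N]$ be a partition of the modes into nonempty cells, let $\sigma_n$ denote the index of the cell containing mode $n$, let $\tilde I_1,\dots,\tilde I_K$ be positive integers and $I_n=\tilde I_{\sigma_n}$. Let $\ell:\mathbb{R}\times\mathbb{R}\to\mathbb{R}$ be differentiable in its second argument, and let $\mathcal{X}\in\mathbb{R}^{I_1\times\cdots\times I_N}$ be symmetric with respect to the partition $\mathcal{I}_1\sqcup\cdots\sqcup\mathcal{I}_K$. Define, for $\boldsymbol{\lambda}\in\mathbb{R}^r$ and $\mathbf{A}_k\in\mathbb{R}^{\tilde I_k\times r}$, $$\mathcal{F}(\boldsymbol{\lambda},\mathbf{A}_1,\dots,\mathbf{A}_K)=\sum_{i}\ell(x_i,m_i),\qquad \mathcal{M}=\sum_{j=1}^r\lambda_j(\mathbf{A}_{\sigma_1})_{:,j}\circ\cdots\circ(\mathbf{A}_{\sigma_N})_{:,j},$$ and let $\mathcal{Y}$ have entries $y_i=\frac{\partial\ell}{\partial m}(x_i,m_i)$. Then for each $k\in[K]$ and any $k'\in\mathcal{I}_k$, $$\frac{\partial\mathcal{F}}{\partial\mathbf{A}_k} = |\mathcal{I}_k|\,\mathbf{Y}_{(k')}\Big(\textstyle\bigodot_{j\neq k'}\mathbf{A}_{\sigma_j}\Big)\operatorname{diag}(\boldsymbol{\lambda}),$$ where $\bigodot_{j\neq t}\mathbf{A}_{\sigma_j}=\mathbf{A}_{\sigma_N}\odot\cdots\odot\mathbf{A}_{\sigma_{t+1}}\odot\mathbf{A}_{\sigma_{t-1}}\odot\cdots\odot\mathbf{A}_{\sigma_1}$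 and $|\mathcal{I}_k|$ is the number of modes in $\mathcal{I}_k$.
   Context: A tensor is symmetric with respect to the partition if its entries are unchanged under every permutation of its $N$ indices that maps each cell $\mathcal{I}_\ell$ to itself, i.e. $x_{(i_{\pi(1)},\dots,i_{\pi(N)})}=x_{(i_1,\dots,i_N)}$. $\circ$ is the outer product; $\odot$ is the Khatri–Rao product ($j$-th column of $\mathbf{A}\odot\mathbf{B}$ is $\mathbf{A}_{:,j}\otimes\mathbf{B}_{:,j}$). The mode-$t$ matricization $\mathbf{Y}_{(t)}\in\mathbb{R}^{I_t\times\prod_{j\neq t}I_j}$ places $y_{i_1,\dots,i_N}$ in row $i_t$ and column $1+\sum_{k\neq t}(i_k-1)\prod_{m<k,\,m\neq t}I_m$. $\partial\mathcal{F}/\partial\mathbf{A}_k$ is the matrix of partial derivatives with the shape of $\mathbf{A}_k$. *)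

(* Defs.v *)
From HB Require Import structures.
From mathcomp Require Import all_boot all_order all_algebra all_fingroup.
From mathcomp Require Import all_classical all_reals all_analysis.
Set Implicit Arguments. Unset Strict Implicit. Unset Printing Implicit Defensive.
Import Order.TTheory GRing.Theory Num.Theory.
Local Open Scope ring_scope.

Section PartitionSymmetricCP.
Context {R : realType} {N K r : nat} (sigma : 'I_N -> 'I_K) (Itil : 'I_K -> nat).

Definition msize (n : 'I_N) : nat := Itil (sigma n).

(* multi-indices (i_1,...,i_N) with 0 <= i_n < I_n  (0-based) *)
Definition midx := {dffun forall n : 'I_N, 'I_(msize n)}.

Definition cell (k : 'I_K) : {set 'I_N} := [set n | sigma n == k].

Definition tensor := midx -> R.

(* total accessor: value of X at a nat-valued index function f
   (0 if f is out of range; f is always in range where used) *)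
Definition tget (X : tensor) (f : 'I_N -> nat) : R :=
  \sum_(i : midx | [forall n, val (i n) == f n]) X i.

Definition mget {m c : nat} (A : 'M[R]_(m, c)) (p : nat) (j : 'I_c) : R :=
  \sum_(q : 'I_m | val q == p) A q j.

Definition partition_symmetric (X : tensor) : Prop :=
  forall pi : {perm 'I_N}, (forall n, sigma (pi n) = sigma n) ->
    forall i : midx, tget X (fun n => val (i (pi n))) = X i.

Definition cp_model (lam : 'rV[R]_r) (A : forall k : 'I_K, 'M[R]_(Itil k, r))
  : tensor := fun i => \sum_(j < r) lam 0 j * \prod_(n < N) A (sigma n) (i n) j.

Definition cp_obj (l : R -> R -> R) (X : tensor) (lam : 'rV[R]_r)
  (A : forall k : 'I_K, 'M[R]_(Itil k, r)) : R :=
  \sum_(i : midx) l (X i) (cp_model lam A i).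

Definition upd_factor (A : forall k : 'I_K, 'M[R]_(Itil k, r))
  (k : 'I_K) (p : 'I_(Itil k)) (q : 'I_r) (t : R) :
  forall k' : 'I_K, 'M[R]_(Itil k', r) :=
  fun k' => \matrix_(a, b)
    (if (k' == k) && (val a == val p) && (b == q) then t else A k' a b).

Definition grad_tensor (l : R -> R -> R) (X : tensor) (lam : 'rV[R]_r)
  (A : forall k : 'I_K, 'M[R]_(Itil k, r)) : tensor :=
  fun i => derive1 (l (X i)) (cp_model lam A i).

Definition ncols (t : 'I_N) : nat := \prod_(m < N | m != t) msize m.

(* mixed-radix weight of mode k in the mode-t unfolding: prod_{m<k, m<>t} I_m *)
Definition radix (t k : 'I_N) : nat :=
  \prod_(m < N | (m < k)%N && (m != t)) msize m.

(* 0-based column of y_i in Y_(t): sum_{k<>t} i_k prod_{m<k, m<>t} I_m *)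
Definition col_of (t : 'I_N) (i : midx) : nat :=
  (\sum_(k < N | k != t) val (i k) * radix t k)%N.

(* mode-t matricization Y_(t): y_i is placed in row i_t, column col_of t i *)
Definition unfold (t : 'I_N) (Y : tensor) : 'M[R]_(msize t, ncols t) :=
  \matrix_(a, c) \sum_(i : midx | (val (i t) == val a) && (col_of t i == val c)) Y i.

(* Khatri-Rao product A_{sigma_N} (.) ... (.) A_{sigma_{t+1}} (.) A_{sigma_{t-1}}
   (.) ... (.) A_{sigma_1}: column j is the Kronecker product of the columns,
   whose (0-based) row c corresponds to the indices
   i_k = (c / prod_{m<k, m<>t} I_m) mod I_k  (A_{sigma_1} varying fastest). *)
Definition khatri_rao_except (A : forall k : 'I_K, 'M[R]_(Itil k, r)) (t : 'I_N)
  : 'M[R]_(ncols t, r) :=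
  \matrix_(c, j) \prod_(k < N | k != t)
     mget (A (sigma k)) ((val c %/ radix t k) %% msize k)%N j.

End PartitionSymmetricCP.

(* Main.v *)
Require Import Defs.
From HB Require Import structures.
From mathcomp Require Import all_boot all_order all_algebra all_fingroup.
From mathcomp Require Import all_classical all_reals all_analysis.
Import Order.TTheory GRing.Theory Num.Theory.
Local Open Scope ring_scope.
Set Implicit Arguments. Unset Strict Implicit.
From mathcomp Require Import zify.
Section Radix.
Local Open Scope nat_scope.
Variables (N : nat) (s : 'I_N -> nat) (t : 'I_N).
Definition wr (k : nat) := \prod_(m < N | (m < k)%N && (m != t)) s m.

Lemma dvdn_prod_sub (P Q : pred 'I_N) (f : 'I_N -> nat) :
  (forall j, P j -> Q j) -> \prod_(j | P j) f j %| \prod_(j | Q j) f j.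
Proof.
move=> PQ; rewrite (bigID P Q) /=.
have -> : \prod_(i | Q i && P i) f i = \prod_(i | P i) f i.
  by apply: eq_bigl => j; case: (boolP (P j)) => Pj; rewrite ?andbT ?andbF ?PQ.
exact: dvdn_mulr.
Qed.

Lemma radix_sum_lt (d : 'I_N -> nat) : (forall m, d m < s m) ->
  forall k, k <= N -> \sum_(j < N | (j < k) && (j != t)) d j * wr j < wr k.
Proof.
move=> ds; elim=> [|k IH] kN.
  rewrite /wr !big_pred0 // => j; by rewrite ltn0.
have kN' : k < N by [].
set ko := Ordinal kN'.
have := IH (ltnW kN); case: (eqVneq ko t) => [kt|kt] H.
  have E : forall j : 'I_N, ((j < k.+1) && (j != t)) = ((j < k) && (j != t)).
    move=> j; rewrite ltnS leq_eqVlt; case: (eqVneq j t) => [->|jt]; rewrite ?andbF //.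
    rewrite !andbT; case: eqP => //= jk; exfalso; move/eqP: jt; apply.
    by apply: val_inj; rewrite /= jk -kt.
  by rewrite /wr (eq_bigl _ _ E) (eq_bigl _ _ E) /=.
have E : forall j : 'I_N, ((j < k.+1) && (j != t)) && (j != ko) = ((j < k) && (j != t)).
  move=> j; rewrite ltnS leq_eqVlt; case: (eqVneq j ko) => [->|jk]; rewrite ?andbF /=.
    by rewrite ltnn.
  have -> : (nat_of_ord j == k) = false by apply/negbTE; apply: contra jk => /eqP e; apply/eqP/val_inj.
  by rewrite andbT.
have Pk : (ko < k.+1) && (ko != t) by rewrite /= ltnS leqnn kt.
rewrite /wr (bigD1 ko Pk) /= (bigD1 ko Pk) /= (eq_bigl _ _ E) (eq_bigl _ _ E).
rewrite -/(wr k) in H *.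
have hw : wr ko = wr k by [].
have := ds ko; set S := \sum_(_ < N | _) _ in H *.
move: (wr k) (d ko) (s ko) H => W D Sk H1 H2; nia.
Qed.

Lemma wr_dvd (m k : 'I_N) : m != t -> m < k -> wr m * s m %| wr k.
Proof.
move=> mt mk; have Pm : (m < k) && (m != t) by rewrite mk mt.
rewrite /wr [X in _ %| X](bigD1 m Pm) /= [X in _ %| X]mulnC; apply: dvdn_mul => //.
apply: dvdn_prod_sub => j /andP[jm ->]; rewrite andbT.
rewrite (ltn_trans jm mk) /=; by apply: contraTneq jm => ->; rewrite ltnn.
Qed.

Lemma wr_gt0 (d : 'I_N -> nat) : (forall m, d m < s m) -> forall k, 0 < wr k.
Proof. by move=> ds k; apply: prodn_gt0 => j; apply: leq_ltn_trans (ds j). Qed.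

Lemma col_lt (d : 'I_N -> nat) : (forall m, d m < s m) ->
  \sum_(j < N | j != t) d j * wr j < \prod_(j < N | j != t) s j.
Proof.
move=> ds; have := radix_sum_lt ds (leqnn N).
by rewrite /wr; under eq_bigl do rewrite ltn_ord /=; under [X in _ < X]eq_bigl do rewrite ltn_ord /=.
Qed.

Lemma col_digit (d : 'I_N -> nat) : (forall m, d m < s m) ->
  forall m : 'I_N, m != t -> ((\sum_(j < N | j != t) d j * wr j) %/ wr m) %% s m = d m.
Proof.
move=> ds m mt.
rewrite (bigID (fun j : 'I_N => j < m)) /=.
have Pm : (m != t) && ~~ (m < m) by rewrite mt ltnn.
rewrite [X in _ + X](bigD1 m Pm) /=.
set L := \sum_(i < N | _ && (i < m)) _.
set H := \sum_(i < N | _) _.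
have hL : L < wr m.
  have := radix_sum_lt ds (ltnW (ltn_ord m)).
  by rewrite /L; under eq_bigl do rewrite andbC.
have hH : wr m * s m %| H.
  apply: dvdn_sum => j /andP[/andP[jt jm] jmm]; apply: dvdn_mull; apply: wr_dvd => //.
  by rewrite ltn_neqAle leqNgt jm andbT eq_sym; apply: contra jmm => /eqP e; apply/eqP/val_inj.
have w0 := wr_gt0 ds m.
rewrite -(divnK hH); set Q := H %/ _.
have -> : L + (d m * wr m + Q * (wr m * s m)) = (d m + Q * s m) * wr m + L.
  by rewrite mulnDl -mulnA [s m * wr m]mulnC; lia.
rewrite divnMDl // divn_small // addn0 addnC modnMDl modn_small //.
Qed.
End Radix.


Lemma chain_rule (R : realType) (f g : R -> R) (x df : R) :
  is_derive x 1 f df -> derivable g (f x) 1 ->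
  is_derive x 1 (g \o f) (derive1 g (f x) * df).
Proof.
move=> hf hg; have hfd : derivable f x 1 by case: hf.
apply: DeriveDef.
  by apply/derivable1_diffP; apply: differentiable_comp; apply/derivable1_diffP.
by rewrite -derive1E derive1_comp // [derive1 f x]derive1E (@derive_val _ _ _ _ _ _ _ hf).
Qed.

Lemma is_derive_prod_seq (R : realType) (I : eqType) (s : seq I)
  (f : I -> R -> R) (df : I -> R) (x : R) :
  uniq s -> (forall i, is_derive x 1 (f i) (df i)) ->
  is_derive x 1 (fun t => \prod_(i <- s) f i t)
    (\sum_(i <- s) df i * \prod_(j <- s | j != i) f j x).
Proof.
move=> us hd; elim: s us => [|a s IH] /=.
  move=> _; rewrite big_nil.
  have -> : (fun t : R => \prod_(i <- [::]) f i t) = cst 1.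
    by apply/funext => t; rewrite big_nil.
  exact: is_derive_cst.
case/andP => anot us.
have -> : (fun t : R => \prod_(i <- a :: s) f i t)
   = f a * (fun t => \prod_(i <- s) f i t).
  by apply/funext => t; rewrite big_cons.
apply: is_derive_eq; first exact: is_deriveM (hd a) (IH us).
rewrite big_cons /= big_cons eqxx /= addrC; congr (_ + _).
  rewrite /GRing.scale /= mulrC; congr (_ * _).
  rewrite big_seq_cond [RHS]big_seq_cond; apply: eq_bigl => j.
  by case: (boolP (j \in s)) => //= js; case: (eqVneq j a) => // ja; rewrite -ja js in anot.
rewrite /GRing.scale /= big_distrr /= big_seq [RHS]big_seq; apply: eq_bigr => i is_.
rewrite big_cons; have -> : (a != i) by apply/eqP => ai; rewrite ai is_ in anot.
by rewrite mulrCA.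
Qed.

Lemma derive_sum_seq (R : realType) (I : Type) (s : seq I) (h : I -> R -> R) (dh : I -> R) (x : R) :
  (forall i, is_derive x 1 (h i) (dh i)) ->
  is_derive x 1 (fun t => \sum_(i <- s) h i t) (\sum_(i <- s) dh i).
Proof.
move=> hd; elim: s => [|a s IH].
  have -> : (fun t : R => \sum_(i <- [::]) h i t) = cst 0.
    by apply/funext => t; rewrite big_nil.
  rewrite big_nil; exact: is_derive_cst.
have -> : (fun t : R => \sum_(i <- a :: s) h i t) = h a + (fun t => \sum_(i <- s) h i t).
  by apply/funext => t; rewrite big_cons.
rewrite big_cons; exact: is_deriveD.
Qed.

Lemma derive_scale (R : realType) (f : R -> R) (c x df : R) :
  is_derive x 1 f df -> is_derive x 1 (fun t => c * f t) (c * df).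
Proof.
move=> hf; have -> : (fun t => c * f t) = c *: f by apply/funext.
exact: is_deriveZ.
Qed.

Lemma mgetE (R : realType) m c (B : 'M[R]_(m,c)) (a : 'I_m) j : mget B (val a) j = B a j.
Proof. by rewrite /mget (big_pred1 a) // => b; rewrite val_eqE. Qed.

Section Main.
Context {R : realType} {N K r : nat} (sigma : 'I_N -> 'I_K) (Itil : 'I_K -> nat).
Context (A : forall k : 'I_K, 'M[R]_(Itil k, r)).
Local Notation idx := (midx sigma Itil).

Lemma mget_eq k1 k2 (e : k1 = k2) v j : mget (A k1) v j = mget (A k2) v j.
Proof. by rewrite e. Qed.

Definition av (i : idx) m j := mget (A (sigma m)) (val (i m)) j.

Lemma tget_val (X : @tensor R _ _ sigma Itil) (j : idx) : tget X (fun n => val (j n)) = X j.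
Proof.
rewrite /tget (big_pred1 j) // => i; apply/forallP/eqP => [h|->//].
by apply/ffunP => n; apply/val_inj/eqP/h.
Qed.

Definition permi (pi : {perm 'I_N}) (H : forall n, sigma (pi n) = sigma n) (i : idx) : idx :=
  finfun (fun n => cast_ord (congr1 Itil (H n)) (i (pi n))).

Lemma permiE pi H i n : val (@permi pi H i n) = val (i (pi n)).
Proof. by rewrite /permi ffunE. Qed.

Lemma permi_inj pi H : injective (@permi pi H).
Proof.
move=> i1 i2 e; apply/ffunP => n; apply/val_inj.
have := congr1 (fun i : idx => val (i ((pi^-1)%g n))) e.
by rewrite /= !permiE permKV.
Qed.

Lemma prod_permi pi H i (P : pred 'I_N) j :
  \prod_(n | P n) av (@permi pi H i) n j = \prod_(n | P ((pi^-1)%g n)) av i n j.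
Proof.
rewrite [RHS](reindex_inj (@perm_inj _ pi)) /=.
under [RHS]eq_bigl do rewrite permK.
apply: eq_bigr => n _; rewrite /av permiE; by rewrite (H n).
Qed.

Definition Gs (y : idx -> R) (p : nat) q (n : 'I_N) :=
  \sum_(i : idx | val (i n) == p) y i * \prod_(m | m != n) av i m q.

Lemma G_sym (y : idx -> R)
  (ysym : forall pi H i, y (@permi pi H i) = y i) p q n1 n2 :
  sigma n1 = sigma n2 -> Gs y p q n1 = Gs y p q n2.
Proof.
move=> e12; set pi := tperm n1 n2.
have H : forall n, sigma (pi n) = sigma n.
  by move=> n; rewrite /pi; case: tpermP => [->|->|]; rewrite ?e12.
rewrite /Gs [RHS](reindex_inj (@permi_inj pi H)) /=.
apply: eq_big => i.
  by rewrite permiE /pi tpermR.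
move=> _; rewrite ysym prod_permi; congr (_ * _); apply: eq_bigl => m.
rewrite /pi tpermV; case: tpermP => [->|->|a b]; rewrite ?eqxx ?(eq_sym n1) //.
by rewrite (introN eqP a) (introN eqP b).
Qed.
Lemma upd_same k (p : 'I_(Itil k)) q k' a b :
  upd_factor A p q (A k p q) k' a b = A k' a b.
Proof.
rewrite mxE; case: ifP => // /andP[/andP[/eqP e /eqP e2] /eqP ->].
subst k'; by have -> : a = p by apply: val_inj.
Qed.

Lemma upd_derive k (p : 'I_(Itil k)) q k' a b (x : R) :
  is_derive x 1 (fun t => upd_factor A p q t k' a b)
    (if (k' == k) && (val a == val p) && (b == q) then 1 else 0).
Proof.
have -> : (fun t => upd_factor A p q t k' a b) =
  fun t => if (k' == k) && (val a == val p) && (b == q) then t else A k' a b.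
  by apply/funext => t; rewrite mxE.
case: ((k' == k) && _ && _).
  exact: is_derive_id.
exact: is_derive_cst.
Qed.

Lemma model_derive k (p : 'I_(Itil k)) q lam (i : idx) :
  is_derive (A k p q) 1 (fun t => cp_model lam (upd_factor A p q t) i)
    (lam 0 q * \sum_(n | (sigma n == k) && (val (i n) == val p)) \prod_(m | m != n) av i m q).
Proof.
rewrite /cp_model; apply: is_derive_eq.
  apply: derive_sum_seq => j; apply: derive_scale.
  apply: is_derive_prod_seq; first exact: index_enum_uniq.
  move=> n; exact: upd_derive.
rewrite (bigD1 q) //= [X in _ + X]big1 ?addr0; last first.
  move=> j jq; rewrite big1 ?mulr0 // => n _; by rewrite (negbTE jq) andbF mul0r.
congr (_ * _); rewrite [RHS]big_mkcond /=; apply: eq_bigr => n _.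
rewrite eqxx andbT; case: ifP => _; last by rewrite mul0r.
by rewrite mul1r; apply: eq_bigr => m _; rewrite upd_same /av mgetE.
Qed.

Lemma col_of_lt (t : 'I_N) (i : idx) : (col_of t i < ncols sigma Itil t)%N.
Proof. exact: (@col_lt N (msize sigma Itil) t (fun m => val (i m)) (fun m => ltn_ord (i m))). Qed.

Lemma col_of_digit (t : 'I_N) (i : idx) m : m != t ->
  ((col_of t i %/ radix sigma Itil t m) %% msize sigma Itil m)%N = val (i m).
Proof. exact: (@col_digit N (msize sigma Itil) t (fun m => val (i m)) (fun m => ltn_ord (i m))). Qed.

Definition colord (t : 'I_N) (i : idx) : 'I_(ncols sigma Itil t) := Ordinal (col_of_lt t i).

Lemma unfold_mul (Y : idx -> R) lam (t : 'I_N) (v : nat) q :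
  mget (unfold t Y *m khatri_rao_except sigma A t *m diag_mx lam) v q
  = lam 0 q * Gs Y v q t.
Proof.
rewrite /mget mul_mx_diag; under eq_bigr do rewrite mxE mulrC.
rewrite -big_distrr /=; congr (_ * _).
have inner : forall a : 'I_(msize sigma Itil t),
  (unfold t Y *m khatri_rao_except sigma A t) a q
  = \sum_(i : idx | val (i t) == val a) Y i * \prod_(m | m != t) av i m q.
  move=> a; rewrite mxE.
  rewrite (partition_big (colord t) xpredT) //=.
  apply: eq_bigr => c _; rewrite mxE big_distrl /=.
  apply: eq_big => [i|i /andP[_ /eqP ec]].
    by congr (_ && _); rewrite -val_eqE.
  rewrite mxE; congr (_ * _); apply: eq_bigr => m mt.
  by rewrite (_ : \val c = col_of t i) ?col_of_digit.
under eq_bigr do rewrite inner.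
rewrite /Gs (partition_big (fun i : idx => i t) (fun a => val a == v)) //=.
apply: eq_bigr => a /eqP av_; apply: eq_bigl => i.
rewrite -av_; apply/idP/idP => [/eqP e|/andP[_ /eqP ->] //].
by rewrite e eqxx /=; apply/eqP/val_inj.
Qed.

Lemma cp_model_av lam (i : idx) :
  cp_model lam A i = \sum_(j < r) lam 0 j * \prod_(n < N) av i n j.
Proof. by apply: eq_bigr => j _; congr (_ * _); apply: eq_bigr => n _; rewrite /av mgetE. Qed.

Lemma cp_model_permi pi H lam (i : idx) :
  cp_model lam A (@permi pi H i) = cp_model lam A i.
Proof.
rewrite !cp_model_av; apply: eq_bigr => j _; congr (_ * _).
by rewrite prod_permi.
Qed.

Lemma X_permi (X : @tensor R _ _ sigma Itil) (X_sym : partition_symmetric X) pi H (i : idx) :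
  X (@permi pi H i) = X i.
Proof.
rewrite -tget_val -[RHS](X_sym pi H i); congr tget.
by apply/funext => n; rewrite permiE.
Qed.

End Main.

Theorem corollary1 (R : realType) (N K r : nat)
  (sigma : 'I_N -> 'I_K) (Itil : 'I_K -> nat)
  (cells_nonempty : forall k : 'I_K, exists n : 'I_N, sigma n = k)
  (Itil_pos : forall k : 'I_K, (0 < Itil k)%N)
  (l : R -> R -> R)
  (l_diff : forall x m : R, derivable (l x) m 1)
  (X : tensor sigma Itil)
  (X_sym : partition_symmetric X)
  (lam : 'rV[R]_r) (A : forall k : 'I_K, 'M[R]_(Itil k, r)) :
  forall (k : 'I_K) (k' : 'I_N), k' \in cell sigma k ->
  forall (p : 'I_(Itil k)) (q : 'I_r),
    is_derive (A k p q) 1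
      (fun t : R => cp_obj l X lam (upd_factor A p q t))
      (#|cell sigma k|%:R *
         mget (unfold k' (grad_tensor l X lam A)
                 *m khatri_rao_except sigma A k' *m diag_mx lam) (val p) q).
Proof.
move=> k k' hk p q.
have sk : sigma k' = k by move: hk; rewrite inE => /eqP.
set y := grad_tensor l X lam A.
have ysym : forall (pi : {perm 'I_N}) (H : forall n, sigma (pi n) = sigma n) (i : midx sigma Itil), y (permi H i) = y i.
  by move=> pi H i; rewrite /y /grad_tensor (X_permi X_sym) cp_model_permi.
have e1 : forall i : midx sigma Itil, cp_model lam (upd_factor A p q (A k p q)) i = cp_model lam A i.
  move=> i; rewrite /cp_model /=. apply: eq_bigr => j _; congr (_ * _).
  by apply: eq_bigr => n _; rewrite upd_same.
rewrite /cp_obj; apply: is_derive_eq.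
  apply: derive_sum_seq => i.
  exact: (chain_rule (model_derive A p q lam i) (l_diff _ _)).
rewrite unfold_mul.
under eq_bigr do rewrite e1 -/(y _).
transitivity (lam 0 q * \sum_(n | sigma n == k) Gs A y (val p) q n).
  under eq_bigr do rewrite mulrCA big_distrr /=.
  rewrite -big_distrr /=; congr (_ * _).
  under eq_bigr do rewrite big_mkcondr /=.
  rewrite exchange_big /=; apply: eq_bigr => n _; rewrite /Gs [RHS]big_mkcond /=.
  by apply: eq_bigr => i _.
under eq_bigr => n /eqP e do rewrite (@G_sym R N K r sigma Itil A y ysym (val p) q n k' (etrans e (esym sk))).
rewrite (eq_bigl (fun n => n \in cell sigma k)); last by move=> n; rewrite inE.
by rewrite sumr_const mulrnAr -mulr_natl.
Qed.
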